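(* Let $\Lambda=KQ/\langle I\rangle$ be a gentle algebra over an algebraically closed field $K$, let $\Gamma=KQ^{Aus}/\langle I^{Aus}\rangle$, and let $\Phi:\mathrm{mod}\,\Lambda\to\mathrm{mod}\,\Gamma$ and $\mathrm{res}:\mathrm{mod}\,\Gamma\to\mathrm{mod}\,\Lambda$ be the functors described in the context. Then: (i) For all $M\in\mathrm{mod}\,\Lambda$ and $N\in\mathrm{mod}\,\Gamma$, the maps $\mathrm{Hom}_\Gamma(\Phi(M),N)\xrightarrow{\mathrm{res}}\mathrm{Hom}_\Lambda(\mathrm{res}\,\Phi(M),\mathrm{res}\,N)\cong\mathrm{Hom}_\Lambda(M,\mathrm{res}\,N)$ and $\mathrm{Hom}_\Gamma(N,\Phi(M))\xrightarrow{\mathrm{res}}\mathrm{Hom}_\Lambda(\mathrm{res}\,N,\mathrm{res}\,\Phi(M))\cong\mathrm{Hom}_\Lambda(\mathrm{res}\,N,M)$ are injective (where the isomorphisms come from the natural isomorphism $\mathrm{res}\,\Phi(M)\cong M$). (ii) The functor $\Phi$ is fully faithful. In particular, $\Phi$ preserves injective and surjective morphisms.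
   Context: Conventions: arrows $\alpha:s(\alpha)\to t(\alpha)$; paths are composed right to left, so $\beta\alpha$ means $\alpha$ followed by $\beta$. A gentle algebra is $\Lambda=KQ/\langle I\rangle$ (finite dimensional) where $I$ is a set of length-$2$ paths such that: each vertex is the start of at most two and the end of at most two arrows; for each arrow $\alpha$ there is at most one arrow $\beta$ with $t(\beta)=s(\alpha)$, $\alpha\beta\notin I$, at most one $\gamma$ with $s(\gamma)=t(\alpha)$, $\gamma\alpha\notin I$, at most one $\beta$ with $t(\beta)=s(\alpha)$, $\alpha\beta\in I$, and at most one $\gamma$ with $s(\gamma)=t(\alpha)$, $\gamma\alpha\in I$. Modules are finite dimensional left modules, identified with representations $M=((M_i)_{i\in Q_0},(M_\alpha)_{\alpha\in Q_1})$ of $(Q,I)$. $\mathcal{C}(\Lambda)$ is the set of repetition-free cyclic paths $\alpha_1\cdots\alpha_n$ (up to cyclic permutation) with $\alpha_i\alpha_{i+1}\in I$ for all $i$ (indices mod $n$). $Q_1^{cyc}$ is the set of arrows lying on some cycle in $\mathcal{C}(\Lambda)$ and $Q_1^{ncyc}=Q_1\setminus Q_1^{cyc}$. The quiver $Q^{Aus}$ has vertex set $Q_0\sqcup Q_1^{cyc}$ and arrow set $Q_1^{ncyc}\sqcup\{\alpha^+:s(\alpha)\to\alpha\mid\alpha\in Q_1^{cyc}\}\sqcup\{\alpha^-:\alpha\to t(\alpha)\mid\alpha\in Q_1^{cyc}\}$; $I^{Aus}=\{\beta^+\alpha^-\mid\beta\alpha\in I,\ \alpha,\beta\in Q_1^{cyc}\}\cup\{\beta\alpha\mid\beta\alpha\in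 I,\ \alpha,\beta\in Q_1^{ncyc}\}$. The algebra $\Gamma=KQ^{Aus}/\langle I^{Aus}\rangle$ is (isomorphic to) the Cohen–Macaulay Auslander algebra of $\Lambda$. The functor $\Phi$: for $M\in\mathrm{mod}\,\Lambda$, $\Phi(M)=\widehat{M}$ has $\widehat{M}_i=M_i$ for $i\in Q_0$, $\widehat{M}_\alpha=\mathrm{Im}\,M_\alpha$ for $\alpha\in Q_1^{cyc}$, $\widehat{M}_\beta=M_\beta$ for $\beta\in Q_1^{ncyc}$, and $\widehat{M}_{\alpha^+}:M_{s(\alpha)}\to\mathrm{Im}\,M_\alpha$, $\widehat{M}_{\alpha^-}:\mathrm{Im}\,M_\alpha\to M_{t(\alpha)}$ the surjection and inclusion factoring $M_\alpha$; on morphisms $\Phi$ acts by the induced maps. The functor $\mathrm{res}$: for $N\in\mathrm{mod}\,\Gamma$, $(\mathrm{res}\,N)_i=N_i$ for $i\in Q_0$, $(\mathrm{res}\,N)_\alpha=N_\alpha$ for $\alpha\in Q_1^{ncyc}$, and $(\mathrm{res}\,N)_\alpha=N_{\alpha^-}N_{\alpha^+}$ for $\alpha\in Q_1^{cyc}$; on morphisms it keeps the components at vertices in $Q_0$. *)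

(* Defs.v *)
From mathcomp Require Import all_boot all_order all_algebra.
Set Implicit Arguments.
Unset Strict Implicit.
Unset Printing Implicit Defensive.
Import GRing.Theory.
Local Open Scope ring_scope.

(* I : rel A, where [I b a] means that the length-2 path "b a"        *)
(* (a followed by b) lies in the set of relations.                    *)
(* A representation M assigns K^(rdim M v) to each vertex v and to    *)
(* each arrow a a matrix rmor M a acting on ROW vectors:              *)
(*   K^(rdim M (src a)) -> K^(rdim M (tgt a)),  x |-> x *m rmor M a.  *)
(* Hence the path "b a" acts by  rmor M a *m rmor M b.                *)
Section Representations.
Variables (K : fieldType) (V A : finType) (src tgt : A -> V) (I : rel A).

Record rep := Rep {
  rdim : V -> nat;
  rmor : forall a : A, 'M[K]_(rdim (src a), rdim (tgt a)) }.

Definition is_module (M : rep) : Prop :=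
  forall (a b : A) (e : tgt a = src b), I b a ->
    rmor M a *m castmx (congr1 (rdim M) (esym e), erefl) (rmor M b) = 0.

Definition rhom (M N : rep) := forall v : V, 'M[K]_(rdim M v, rdim N v).

Definition is_rhom (M N : rep) (f : rhom M N) : Prop :=
  forall a : A, rmor M a *m f (tgt a) = f (src a) *m rmor N a.

Definition hom_injective (M N : rep) (f : rhom M N) : Prop :=
  forall v, row_free (f v).
Definition hom_surjective (M N : rep) (f : rhom M N) : Prop :=
  forall v, row_full (f v).

End Representations.

Section Gentle.
Variables (V A : finType) (src tgt : A -> V) (I : rel A).

(* a path a_1 ... a_n (a_1 first, listed left to right) with no       *)
(* subpath in I; the empty sequence counts as well                    *)
Definition relfree_path (s : seq A) : bool :=
  if s is a :: s' then path (fun x y => (tgt x == src y) && ~~ I y x) a s'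
  else true.

Definition gentle : Prop :=
  (* relations are paths of length 2 *)
      (forall a b, I b a -> tgt a = src b) /\
      (forall v, #|[set a | src a == v]| <= 2)%N /\
      (forall v, #|[set a | tgt a == v]| <= 2)%N /\
      (forall a, #|[set b | (tgt b == src a) && ~~ I a b]| <= 1)%N /\
      (forall a, #|[set c | (src c == tgt a) && ~~ I c a]| <= 1)%N /\
      (forall a, #|[set b | (tgt b == src a) && I a b]| <= 1)%N /\
      (forall a, #|[set c | (src c == tgt a) && I c a]| <= 1)%N /\
      (* KQ/<I> is finite dimensional: only finitely many paths avoid I *)
      (exists n : nat, forall s : seq A, size s = n -> ~~ relfree_path s).

(* C(Lambda): repetition-free cyclic sequences a_1 ... a_n with       *)
(* a_i a_(i+1) in I (indices mod n)                                   *)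
Definition rel_cycle (s : seq A) : bool :=
  [&& s != [::], uniq s & cycle I s].

(* a lies on some cycle of C(Lambda); since such cycles are           *)
(* repetition-free, their length is at most #|A|                      *)
Definition on_cycle (a : A) : bool :=
  [exists n : 'I_#|A|.+1, [exists t : n.-tuple A, rel_cycle t && (a \in t)]].

Definition cycA := {a : A | on_cycle a}.
Definition ncycA := {a : A | ~~ on_cycle a}.

Definition VAus := (V + cycA)%type.
(* inl b = b in Q_1^ncyc ; inr (inl a) = a^+ ; inr (inr a) = a^- *)
Definition AAus := (ncycA + (cycA + cycA))%type.

Definition srcAus (x : AAus) : VAus :=
  match x with
  | inl b => inl (src (val b))
  | inr (inl a) => inl (src (val a))
  | inr (inr a) => inr a
  end.

Definition tgtAus (x : AAus) : VAus :=
  match x with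
  | inl b => inl (tgt (val b))
  | inr (inl a) => inr a
  | inr (inr a) => inl (tgt (val a))
  end.

(* I^Aus : [IAus y x] means "y x" in I^Aus *)
Definition IAus (y x : AAus) : bool :=
  match y, x with
  | inl b, inl a => I (val b) (val a)           (* b a, both non-cyclic *)
  | inr (inl b), inr (inr a) => I (val b) (val a) (* b^+ a^-          *)
  | _, _ => false
  end.

End Gentle.

Section Functors.
Variables (K : fieldType) (V A : finType) (src tgt : A -> V) (I : rel A).

Local Notation repL := (rep K src tgt).
Local Notation repG := (rep K (srcAus src (I:=I)) (tgtAus tgt (I:=I))).

(* Phi(M): at a cyclic arrow-vertex a we take Im M_a, realised as the *)
(* row space of row_base (M_a) (of dimension \rank M_a); a^- is the   *)
(* inclusion Im M_a -> M_(t a) and a^+ the corestriction of M_a.      *)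
Definition Phi_dim (M : repL) (x : VAus V I) : nat :=
  match x with
  | inl v => rdim M v
  | inr a => \rank (rmor M (val a))
  end.

Definition Phi_mor (M : repL) (x : AAus I) :
    'M[K]_(Phi_dim M (srcAus src x), Phi_dim M (tgtAus tgt x)) :=
  match x as x0 return
    'M[K]_(Phi_dim M (srcAus src x0), Phi_dim M (tgtAus tgt x0)) with
  | inl b => rmor M (val b)
  | inr (inl a) => rmor M (val a) *m pinvmx (row_base (rmor M (val a)))
  | inr (inr a) => row_base (rmor M (val a))
  end.

Definition Phi (M : repL) : repG := @Rep K _ _ _ _ (Phi_dim M) (Phi_mor M).

Definition Phi_hom (M N : repL) (f : rhom M N) : rhom (Phi M) (Phi N) :=
  fun x =>
  match x as x0 return 'M[K]_(Phi_dim M x0, Phi_dim N x0) with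
  | inl v => f v
  | inr a => row_base (rmor M (val a)) *m f (tgt (val a))
               *m pinvmx (row_base (rmor N (val a)))
  end.

Definition res_dim (N : repG) (v : V) : nat := rdim N (inl v).

Definition res_mor (N : repG) (a : A) :
    'M[K]_(res_dim N (src a), res_dim N (tgt a)) :=
  match on_cycle I a as c return on_cycle I a = c ->
        'M[K]_(res_dim N (src a), res_dim N (tgt a)) with
  | true => fun h =>
      rmor N (inr (inl (exist _ a h))) *m rmor N (inr (inr (exist _ a h)))
  | false => fun h => rmor N (inl (exist _ a (negbT h)))
  end erefl.

Definition res (N : repG) : repL := @Rep K _ _ _ _ (res_dim N) (res_mor N).

Definition res_hom (N N' : repG) (g : rhom N N') : rhom (res N) (res N') :=
  fun v => g (inl v).

End Functors.

(* Main.v *)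
Require Import Defs.
From mathcomp Require Import all_boot all_order all_algebra.

Set Implicit Arguments.
Unset Strict Implicit.
Unset Printing Implicit Defensive.
Import GRing.Theory.
Local Open Scope ring_scope.

Section Help.
Variable F : fieldType.

Lemma Xfact m n (A : 'M[F]_(m, n)) :
  A *m pinvmx (row_base A) *m row_base A = A.
Proof. by apply: mulmxKpV; rewrite eq_row_base. Qed.

Lemma Xfull m n (A : 'M[F]_(m, n)) :
  row_full (A *m pinvmx (row_base A)).
Proof.
rewrite /row_full eqn_leq rank_leq_col /=.
have := mxrankM_maxl (A *m pinvmx (row_base A)) (row_base A).
by rewrite Xfact.
Qed.

Lemma rbK m n p (A : 'M[F]_(m, n)) (G : 'M[F]_(p, \rank A)) :
  G *m row_base A *m pinvmx (row_base A) = G.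
Proof.
apply: (row_free_inj (row_base_free A)).
by apply: mulmxKpV; apply: submxMl.
Qed.
Lemma compose m1 m2 m3 m4 m5 m6 (X1 : 'M[F]_(m1, m2)) (rb1 : 'M[F]_(m2, m3))
  (G3 : 'M[F]_(m3, m4)) (G2 : 'M[F]_(m2, m5)) (G1 : 'M[F]_(m1, m6))
  (X2 : 'M[F]_(m6, m5)) (rb2 : 'M[F]_(m5, m4)) :
  X1 *m G2 = G1 *m X2 -> rb1 *m G3 = G2 *m rb2 ->
  X1 *m rb1 *m G3 = G1 *m (X2 *m rb2).
Proof. by move=> H1 H2; rewrite -mulmxA H2 mulmxA H1 mulmxA. Qed.
End Help.

Theorem lemma3p3 (K : closedFieldType) (V A : finType) (src tgt : A -> V)
    (I : rel A) :
  gentle src tgt I ->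
  (* (i) *)
  (forall (M : rep K src tgt) (N : rep K (srcAus src (I:=I)) (tgtAus tgt (I:=I))),
     is_module I M -> is_module (IAus (I:=I)) N ->
     (forall g g' : rhom (Phi I M) N,
        is_rhom g -> is_rhom g' ->
        (forall v, res_hom g v = res_hom g' v) -> forall x, g x = g' x) /\
     (forall g g' : rhom N (Phi I M),
        is_rhom g -> is_rhom g' ->
        (forall v, res_hom g v = res_hom g' v) -> forall x, g x = g' x)) /\
  (* (ii) *)
  (forall M N : rep K src tgt, is_module I M -> is_module I N ->
     (* faithful *)
     (forall f f' : rhom M N, is_rhom f -> is_rhom f' ->
        (forall x, Phi_hom (I:=I) f x = Phi_hom (I:=I) f' x) -> forall v, f v = f' v) /\
     (* full *)
     (forall g : rhom (Phi I M) (Phi I N), is_rhom g ->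
        exists f : rhom M N, is_rhom f /\ forall x, Phi_hom (I:=I) f x = g x) /\
     (* preserves injective and surjective morphisms *)
     (forall f : rhom M N, is_rhom f -> hom_injective f ->
        hom_injective (Phi_hom (I:=I) f)) /\
     (forall f : rhom M N, is_rhom f -> hom_surjective f ->
        hom_surjective (Phi_hom (I:=I) f))).
Proof.
move=> _; split.
  move=> M N _ _; split.
    move=> g g' Hg Hg' Hr [v|a]; first exact: Hr.
    have E := Hg (inr (inl a)); have E' := Hg' (inr (inl a)).
    simpl in E, E'.
    apply: (row_full_inj (Xfull (rmor M (val a)))).
    by rewrite E E'; congr (_ *m _); apply: Hr.
  move=> g g' Hg Hg' Hr [v|a]; first exact: Hr.
  have E := Hg (inr (inr a)); have E' := Hg' (inr (inr a)).
  simpl in E, E'.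
  apply: (row_free_inj (row_base_free (rmor M (val a)))).
  by rewrite -E -E'; congr (_ *m _); apply: Hr.
move=> M N _ _; split.
  by move=> f f' _ _ H v; exact: (H (inl v)).
split.
  move=> g Hg; exists (fun v => g (inl v)); split.
    move=> a; case: (boolP (on_cycle I a)) => h.
      pose c : cycA I := exist _ a h.
      have E1 := Hg (inr (inl c)); have E2 := Hg (inr (inr c)).
      simpl in E1, E2.
      rewrite -[rmor M a](Xfact (rmor M a)) -[rmor N a](Xfact (rmor N a)).
      exact: (compose E1 E2).
    by have := Hg (inl (exist _ a h)).
  move=> [v|a] //=.
  have E2 := Hg (inr (inr a)); simpl in E2.
  by rewrite E2 rbK.
split.
  move=> f Hf Hinj [v|a] /=; first exact: Hinj.
  set rbM := row_base (rmor M (val a)); set rbN := row_base (rmor N (val a)).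
  have sub : (rbM *m f (tgt (val a)) <= rbN)%MS.
    rewrite /rbM /rbN !eq_row_base.
    by rewrite (eqmxMr _ (eq_row_base (rmor M (val a)))) Hf submxMl.
  have Z := mulmxKpV sub.
  have r1 : \rank (rbM *m f (tgt (val a))) = \rank (rmor M (val a)).
    by rewrite mxrankMfree ?Hinj // /rbM eq_row_base.
  rewrite /row_free eqn_leq rank_leq_row /=.
  by have := mxrankM_maxl (rbM *m f (tgt (val a)) *m pinvmx rbN) rbN; rewrite Z r1.
move=> f Hf Hs [v|a] /=; first exact: Hs.
set rbM := row_base (rmor M (val a)); set rbN := row_base (rmor N (val a)).
have sub : (rbM *m f (tgt (val a)) <= rbN)%MS.
  rewrite /rbM /rbN !eq_row_base.
  by rewrite (eqmxMr _ (eq_row_base (rmor M (val a)))) Hf submxMl.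
have Z := mulmxKpV sub.
rewrite /row_full -(mxrankMfree _ (row_base_free (rmor N (val a)))) -/rbN.
rewrite Z.
rewrite (eqmxMr _ (eq_row_base (rmor M (val a)))) Hf.
by rewrite (eqmxMfull _ (Hs _)).
Qed.
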